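(* Let $\mathbf{n}=(n_0,\dots,n_L)$ and $\mathbf{A}=(A_1,\dots,A_L)\in\mathsf{Param}(\mathbf{n})$ (merged notation), and let $\mathbf{Q}=(Q_1,\dots,Q_{L-1})$ be the tuple of orthogonal matrices produced by the QR compression algorithm applied to $\mathbf{A}$. Then $\mathbf{Q}^{-1}\cdot\mathbf{A}$ belongs to $\mathsf{Param}^{\rm int}(\mathbf{n})$.
   Context: Merged notation: $\mathsf{Param}(\mathbf{n})=\prod_{i=1}^L\mathbb{R}^{n_i\times(n_{i-1}+1)}$, where $A_i=[\,b_i\ W_i\,]$ combines bias $b_i\in\mathbb{R}^{n_i}$ and weights $W_i\in\mathbb{R}^{n_i\times n_{i-1}}$. Reduced widths: $n^{\rm red}_0=n_0$, $n^{\rm red}_i=\min(n_i,n^{\rm red}_{i-1}+1)$ for $1\le i\le L-1$, $n^{\rm red}_L=n_L$. The group $O(n_1)\times\dots\times O(n_{L-1})$ acts by $\mathbf{Q}\cdot\mathbf{A}=\big(Q_iA_i\begin{bmatrix}1&0\\0&Q_{i-1}^{-1}\end{bmatrix}\big)_{i=1}^L$, with $Q_0=\mathrm{id}_{n_0}$, $Q_L=\mathrm{id}_{n_L}$. $\mathsf{Param}^{\rm int}(\mathbf{n})$ is the subspace of $\mathbf{T}=(T_i)\in\mathsf{Param}(\mathbf{n})$ such that for each $i$ the bottom-left $(n_i-n^{\rm red}_i)\times(1+n^{\rm red}_{i-1})$ block of $T_i$ is zero. QR compression algorithm: $M_1=A_1$; for $i=1,\dots,L-1$: compute a complete QR decomposition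 $M_i=Q_i\,\mathrm{inc}_i\,R_i$ with $Q_i\in O(n_i)$, $R_i$ upper triangular of size $n^{\rm red}_i\times(1+n^{\rm red}_{i-1})$ and $\mathrm{inc}_i:\mathbb{R}^{n^{\rm red}_i}\hookrightarrow\mathbb{R}^{n_i}$ the inclusion into the first coordinates; record $Q_i$ and $R_i$; set $M_{i+1}=A_{i+1}\begin{bmatrix}1&0\\0&Q_i\,\mathrm{inc}_i\end{bmatrix}$. The output is $\mathbf{Q}=(Q_i)$ and $\mathbf{V}=(R_1,\dots,R_{L-1},M_L)$. *)

(* Defs.v *)
From mathcomp Require Import all_boot all_order all_algebra.
Set Implicit Arguments. Unset Strict Implicit. Unset Printing Implicit Defensive.
Import GRing.Theory Num.Theory.
Local Open Scope ring_scope.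

(* Layers are indexed 1..L.  Widths n : nat -> nat (only n 0 .. n L matter).
   A parameter A in Param(n) is  A : forall i, 'M_(n i, 1 + n i.-1),
   only the entries A 1 .. A L matter (A i = [b_i W_i]). *)

Definition orthogonal_mx (R : nzRingType) (m : nat) (Q : 'M[R]_m) : Prop :=
  Q^T *m Q = 1%:M.

Definition upper_tri (R : nzRingType) (p q : nat) (M : 'M[R]_(p, q)) : Prop :=
  forall (a : 'I_p) (b : 'I_q), (b < a)%N -> M a b = 0.

Definition incm (R : nzRingType) (m r : nat) : 'M[R]_(m, r) :=
  \matrix_(a < m, b < r) ((a : nat) == b)%:R.

Fixpoint nr (n : nat -> nat) (i : nat) : nat :=
  match i with
  | 0 => n 0
  | k.+1 => minn (n k.+1) (nr n k).+1
  end.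

Definition nred (L : nat) (n : nat -> nat) (i : nat) : nat :=
  if i == L then n L else nr n i.

Definition Qext (R : nzRingType) (L : nat) (n : nat -> nat)
    (Q : forall i, 'M[R]_(n i)) (i : nat) : 'M[R]_(n i) :=
  if (0 < i < L)%N then Q i else 1%:M.

Definition act (R : comUnitRingType) (L : nat) (n : nat -> nat)
    (Q : forall i, 'M[R]_(n i)) (A : forall i, 'M[R]_(n i, 1 + n i.-1))
    (i : nat) : 'M[R]_(n i, 1 + n i.-1) :=
  Qext L Q i *m A i *m block_mx (1%:M : 'M_1) 0 0 (invmx (Qext L Q i.-1)).

Definition Param_int (R : nzRingType) (L : nat) (n : nat -> nat)
    (T : forall i, 'M[R]_(n i, 1 + n i.-1)) : Prop :=
  forall i, (1 <= i <= L)%N ->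
    forall (a : 'I_(n i)) (b : 'I_(1 + n i.-1)),
      (nred L n i <= a)%N -> (b < 1 + nred L n i.-1)%N -> T i a b = 0.

(* The matrices M_i of the QR compression algorithm (i >= 1):
   M_1 = A_1,  M_{k+1} = A_{k+1} [1 0; 0 Q_k inc_k]. *)
Definition qrM (R : nzRingType) (n : nat -> nat)
    (A : forall i, 'M[R]_(n i, 1 + n i.-1)) (Q : forall i, 'M[R]_(n i))
    (i : nat) : 'M[R]_(n i, 1 + nr n i.-1) :=
  match i return 'M[R]_(n i, 1 + nr n i.-1) with
  | 0 => 0
  | k.+1 =>
    match k return 'M[R]_(n k.+1, 1 + nr n k) with
    | 0 => A 1%N
    | k'.+1 => A k'.+2 *m block_mx (1%:M : 'M_1) 0 0 (Q k'.+1 *m @incm R (n k'.+1) (nr n k'.+1))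
    end
  end.

(* (Q, Rm) is a valid run of the QR compression algorithm on A:
   for each 1 <= i <= L-1, M_i = Q_i inc_i R_i with Q_i orthogonal,
   R_i upper triangular of size n^red_i x (1 + n^red_{i-1}). *)
Definition QR_run (R : nzRingType) (L : nat) (n : nat -> nat)
    (A : forall i, 'M[R]_(n i, 1 + n i.-1)) (Q : forall i, 'M[R]_(n i))
    (Rm : forall i, 'M[R]_(nr n i, 1 + nr n i.-1)) : Prop :=
  forall i, (1 <= i < L)%N ->
    [/\ orthogonal_mx (Q i), upper_tri (Rm i)
      & qrM A Q i = Q i *m @incm R (n i) (nr n i) *m Rm i].

(* Main.v *)
Require Import Defs.
From mathcomp Require Import all_boot all_order all_algebra.
Import GRing.Theory.
Local Open Scope ring_scope.

Lemma block_mul1 (R : comUnitRingType) (p q r : nat) (X : 'M[R]_(p, q)) (Y : 'M[R]_(q, r)) :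
  block_mx (1%:M : 'M_1) 0 0 X *m block_mx (1%:M : 'M_1) 0 0 Y
  = block_mx (1%:M : 'M_1) 0 0 (X *m Y).
Proof. by rewrite mulmx_block !mulmx0 !mul0mx !mulmx1 !addr0 !add0r. Qed.

Lemma incm_id (R : nzRingType) m : @incm R m m = 1%:M.
Proof. by apply/matrixP => a b; rewrite !mxE. Qed.

Lemma key (R : realFieldType) (L : nat) (n : nat -> nat)
    (A : forall i, 'M[R]_(n i, 1 + n i.-1))
    (Q : forall i, 'M[R]_(n i))
    (Rm : forall i, 'M[R]_(nr n i, 1 + nr n i.-1)) i :
  QR_run L A Q Rm -> (1 <= i < L)%N ->
  act L (fun i => invmx (Q i)) A i *m block_mx (1%:M : 'M_1) 0 0 (@incm R (n i.-1) (nr n i.-1))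
  = @incm R (n i) (nr n i) *m Rm i.
Proof.
move=> H /andP[i1 iL].
have [orth _ eqM] := H i (introT andP (conj i1 iL)).
have [_ Qu] := mulmx1_unit orth.
rewrite /act /Qext i1 iL /= -!mulmxA block_mul1.
clear orth; move: eqM Qu; case: i i1 iL => [//|[|k]] _ iL /=.
- rewrite invmx1 mul1mx incm_id -scalar_mx_block mulmx1 => -> Qu.
  by rewrite mulmxA mulKmx.
- have -> : (k.+1 < L)%N by rewrite (ltn_trans _ iL).
  rewrite invmxK => -> Qu.
  by rewrite mulmxA mulKmx.
Qed.

Lemma nr_le n i : (nr n i <= n i)%N.
Proof. by case: i => //= k; rewrite geq_minl. Qed.

Lemma block_incm (R : nzRingType) p q :
  block_mx (1%:M : 'M[R]_1) 0 0 (@incm R p q) = @incm R (1 + p) (1 + q).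
Proof.
apply/matrixP => j k; rewrite /incm !mxE.
case: (splitP j) => j' ej; rewrite !mxE; case: (splitP k) => k' ek. all: try rewrite !mxE. all: rewrite ?ej ?ek //=.
- by rewrite (ord1 j').
- by rewrite (ord1 k').
Qed.

Lemma col_incm (R : nzRingType) m p q (T : 'M[R]_(m, 1 + p)) (a : 'I_m)
  (b : nat) (hq : (b < 1 + q)%N) (hb : (b < 1 + p)%N) :
  (T *m block_mx (1%:M : 'M_1) 0 0 (@incm R p q)) a (Ordinal hq) = T a (Ordinal hb).
Proof.
rewrite block_incm mxE (bigD1 (Ordinal hb)) //= big1 ?addr0.
  by rewrite mxE eqxx mulr1.
move=> j hj; rewrite mxE; case: eqP => [e|]; last by rewrite mulr0.
by case/eqP: hj; apply: val_inj.
Qed.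

Lemma incm_low (R : nzRingType) m r s (X : 'M[R]_(r, s)) (a : 'I_m) c :
  (r <= a)%N -> (@incm R m r *m X) a c = 0.
Proof.
move=> ha; rewrite mxE big1 // => j _; rewrite mxE.
case: eqP => [e|]; last by rewrite mul0r.
by move: (ltn_ord j); rewrite -e ltnNge ha.
Qed.

Theorem proposition3 (R : realFieldType) (L : nat) (n : nat -> nat)
    (A : forall i, 'M[R]_(n i, 1 + n i.-1))
    (Q : forall i, 'M[R]_(n i))
    (Rm : forall i, 'M[R]_(nr n i, 1 + nr n i.-1)) :
  QR_run L A Q Rm ->
  Param_int L (act L (fun i => invmx (Q i)) A).
Proof.
move=> H i /andP[i1 iL] a b.
rewrite /nred.
case: eqP => [eL | /eqP iNL].
  move=> ha; have e : n i = n L by rewrite eL.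
  by rewrite -e leqNgt ltn_ord in ha.
have iL' : (i < L)%N by rewrite ltn_neqAle iNL iL.
have -> : (i.-1 == L) = false.
  by apply/negbTE; rewrite neq_ltn (leq_ltn_trans (leq_pred i) iL').
move=> ha hb.
have K := @key R L n A Q Rm i H (introT andP (conj i1 iL')).
have hb2 : (b < 1 + nr n i.-1)%N by [].
have := congr1 (fun M : 'M[R]_(n i, 1 + nr n i.-1) => M a (Ordinal hb2)) K.
rewrite (@col_incm _ _ _ _ _ _ _ _ (ltn_ord b)) (@incm_low _ _ _ _ _ _ _ ha) => <-.
by congr (_ _ _); apply: val_inj.
Qed.
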